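(* Let $\Sigma=(X,\mathcal{U},\phi)$ be an ordered control system which is monotone with respect to inputs and satisfies $\mathcal{U}(x)=\mathcal{U}$ for all $x\in X$. Let $\mathcal{U}_c\subseteq\mathcal{U}$, and assume: (i) there exists $\rho\in\mathcal{K}_\infty$ such that for all $x_-,x,x_+\in X$ with $x_-\le x\le x_+$ one has $\|x\|_X\le\rho(\|x_-\|_X+\|x_+\|_X)$; (ii) there exists $\eta\in\mathcal{K}_\infty$ such that for every $u\in\mathcal{U}$ there exist $u_-,u_+\in\mathcal{U}_c$ with $u_-\le u\le u_+$, $\|u_-\|_{\mathcal{U}}\le\eta(\|u\|_{\mathcal{U}})$ and $\|u_+\|_{\mathcal{U}}\le\eta(\|u\|_{\mathcal{U}})$. Then $\Sigma$ is ISS if and only if $\Sigma$ is ISS with respect to inputs in $\mathcal{U}_c$. Moreover, if $\rho$ is linear, then $\Sigma$ is exp-ISS if and only if $\Sigma$ is exp-ISS with respect to inputs in $\mathcal{U}_c$; and if in addition $\Sigma$ is exp-ISS with respect to inputs in $\mathcal{U}_c$ with a linear gain function and $\eta$ is linear, then $\Sigma$ is exp-ISS with a linear gain function.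
   Context: Comparison functions: $\mathcal{K}$ is the set of continuous strictly increasing $\gamma:\mathbb{R}_+\to\mathbb{R}_+$ with $\gamma(0)=0$; $\mathcal{K}_\infty$ the unbounded functions in $\mathcal{K}$; $\mathcal{L}$ the continuous decreasing $\gamma:\mathbb{R}_+\to\mathbb{R}_+$ with $\gamma(t)\to0$; $\mathcal{KL}$ the functions $\beta:\mathbb{R}_+^2\to\mathbb{R}_+$ with $\beta(\cdot,t)\in\mathcal{K}$ for all $t\ge0$ and $\beta(r,\cdot)\in\mathcal{L}$ for all $r>0$. A control system $\Sigma=(X,\mathcal{U},\phi)$ consists of a normed linear space $X$ (state space), a set $U$ of input values (nonempty subset of a normed linear space), a normed linear space $\mathcal{U}$ of functions $\mathbb{R}_+\to U$ closed under time shifts $u\mapsto u(\cdot+\tau)$, nonempty sets $\mathcal{U}(x)\subseteq\mathcal{U}$ of admissible inputs for each $x\in X$, and a map $\phi$ such that for every $x\in X$, $u\in\mathcal{U}(x)$ and $t\ge0$ the state $\phi(t,x,u)\in X$ is defined, $\phi(0,x,u)=x$, $\phi(t,x,u)=\phi(t,x,\tilde u)$ whenever $\tilde u\in\mathcal{U}(x)$ agrees with $u$ on $[0,t]$, and $u(t+\cdot)\in\mathcal{U}(\phi(t,x,u))$ with $\phi(h,\phi(t,x,u),u(t+\cdot))=\phi(t+h,x,u)$ for all $t,h\ge0$. A positive cone in a normed linear space $X$ is a set $K$ with $K\cap(-K)=\{0\}$, $ax\in K$ and $x+y\in K$ for all $a\ge0$, $x,y\in K$; it induces the order $x\le y\iff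 y-x\in K$. The system is ordered if $X$ and $\mathcal{U}$ carry such orders. It is monotone with respect to inputs if for all $t\ge0$, $x\in X$ and $u_1,u_2\in\mathcal{U}(x)$ with $u_1\le u_2$ one has $\phi(t,x,u_1)\le\phi(t,x,u_2)$. For $\mathcal{U}_c\subseteq\mathcal{U}$, $\Sigma$ is ISS with respect to inputs in $\mathcal{U}_c$ if there exist $\beta\in\mathcal{KL}$, $\gamma\in\mathcal{K}$ such that $\|\phi(t,x,u)\|_X\le\beta(\|x\|_X,t)+\gamma(\|u\|_{\mathcal{U}})$ for all $t\ge0$, all $x\in X$ and all $u\in\mathcal{U}(x)\cap\mathcal{U}_c$; ISS means ISS w.r.t. inputs in $\mathcal{U}$. $\Sigma$ is exp-ISS w.r.t. inputs in $\mathcal{U}_c$ if there exist constants $M,a>0$ and $\gamma\in\mathcal{K}_\infty$ with $\|\phi(t,x,u)\|_X\le Me^{-at}\|x\|_X+\gamma(\|u\|_{\mathcal{U}})$ for the same range of $t,x,u$; exp-ISS means exp-ISS w.r.t. inputs in $\mathcal{U}$; ''with a linear gain function'' means $\gamma$ can be chosen linear. *)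

(* Defs.v *)
From Stdlib Require Import Reals.
Open Scope R_scope.

Record NormedSpace := {
  ns_car :> Type;
  ns_zero : ns_car;
  ns_add : ns_car -> ns_car -> ns_car;
  ns_opp : ns_car -> ns_car;
  ns_scal : R -> ns_car -> ns_car;
  ns_norm : ns_car -> R;
  ns_addA : forall x y z, ns_add x (ns_add y z) = ns_add (ns_add x y) z;
  ns_addC : forall x y, ns_add x y = ns_add y x;
  ns_add0 : forall x, ns_add x ns_zero = x;
  ns_addN : forall x, ns_add x (ns_opp x) = ns_zero;
  ns_scalA : forall a b x, ns_scal a (ns_scal b x) = ns_scal (a * b) x;
  ns_scal1 : forall x, ns_scal 1 x = x;
  ns_scalDr : forall a x y, ns_scal a (ns_add x y) = ns_add (ns_scal a x) (ns_scal a y);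
  ns_scalDl : forall a b x, ns_scal (a + b) x = ns_add (ns_scal a x) (ns_scal b x);
  ns_norm_ge0 : forall x, 0 <= ns_norm x;
  ns_norm_eq0 : forall x, ns_norm x = 0 -> x = ns_zero;
  ns_norm_scal : forall a x, ns_norm (ns_scal a x) = Rabs a * ns_norm x;
  ns_norm_triangle : forall x y, ns_norm (ns_add x y) <= ns_norm x + ns_norm y
}.

Arguments ns_zero {_}.
Arguments ns_add {_} _ _.
Arguments ns_opp {_} _.
Arguments ns_scal {_} _ _.
Arguments ns_norm {_} _.

Definition is_pos_cone (X : NormedSpace) (K : X -> Prop) : Prop :=
  (forall x, K x -> K (ns_opp x) -> x = ns_zero) /\
  (forall a x, 0 <= a -> K x -> K (ns_scal a x)) /\
  (forall x y, K x -> K y -> K (ns_add x y)).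

Definition cone_le (X : NormedSpace) (K : X -> Prop) (x y : X) : Prop :=
  K (ns_add y (ns_opp x)).

Definition Rnn := {t : R | 0 <= t}.

Definition Rnn_shift (tau : R) (Htau : 0 <= tau) (s : Rnn) : Rnn :=
  exist _ (proj1_sig s + tau) (Rplus_le_le_0_compat _ _ (proj2_sig s) Htau).

Record InputSpace (V : NormedSpace) := {
  is_U : V -> Prop;
  is_U_ne : exists v, is_U v;
  is_mem : (Rnn -> V) -> Prop;
  is_norm : (Rnn -> V) -> R;
  is_mem_val : forall u, is_mem u -> forall s, is_U (u s);
  is_mem_zero : is_mem (fun _ => ns_zero);
  is_mem_add : forall u w, is_mem u -> is_mem w -> is_mem (fun s => ns_add (u s) (w s));
  is_mem_scal : forall a u, is_mem u -> is_mem (fun s => ns_scal a (u s));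
  is_mem_shift : forall u tau (Htau : 0 <= tau),
      is_mem u -> is_mem (fun s => u (Rnn_shift tau Htau s));
  is_norm_ge0 : forall u, is_mem u -> 0 <= is_norm u;
  is_norm_eq0 : forall u, is_mem u -> is_norm u = 0 -> forall s, u s = ns_zero;
  is_norm_scal : forall a u, is_mem u ->
      is_norm (fun s => ns_scal a (u s)) = Rabs a * is_norm u;
  is_norm_triangle : forall u w, is_mem u -> is_mem w ->
      is_norm (fun s => ns_add (u s) (w s)) <= is_norm u + is_norm w
}.

Arguments is_U {_} _ _.
Arguments is_mem {_} _ _.
Arguments is_norm {_} _ _.

Definition is_input_cone (V : NormedSpace) (I : InputSpace V)
    (K : (Rnn -> V) -> Prop) : Prop :=
  (forall u, K u -> is_mem I u) /\
  (forall u, K u -> K (fun s => ns_opp (u s)) -> forall s, u s = ns_zero) /\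
  (forall a u, 0 <= a -> K u -> K (fun s => ns_scal a (u s))) /\
  (forall u w, K u -> K w -> K (fun s => ns_add (u s) (w s))).

Definition input_le (V : NormedSpace) (K : (Rnn -> V) -> Prop)
    (u1 u2 : Rnn -> V) : Prop :=
  K (fun s => ns_add (u2 s) (ns_opp (u1 s))).

Record ControlSystem (X V : NormedSpace) (I : InputSpace V) := {
  cs_adm : X -> (Rnn -> V) -> Prop;
  cs_phi : R -> X -> (Rnn -> V) -> X;        (* only used for t >= 0 *)
  cs_adm_sub : forall x u, cs_adm x u -> is_mem I u;
  cs_adm_ne : forall x, exists u, cs_adm x u;
  cs_phi0 : forall x u, cs_adm x u -> cs_phi 0 x u = x;
  cs_causal : forall t x u u', 0 <= t -> cs_adm x u -> cs_adm x u' ->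
      (forall s : Rnn, proj1_sig s <= t -> u s = u' s) ->
      cs_phi t x u = cs_phi t x u';
  cs_shift_adm : forall t (Ht : 0 <= t) x u, cs_adm x u ->
      cs_adm (cs_phi t x u) (fun s => u (Rnn_shift t Ht s));
  cs_cocycle : forall t h (Ht : 0 <= t) x u, 0 <= h -> cs_adm x u ->
      cs_phi h (cs_phi t x u) (fun s => u (Rnn_shift t Ht s)) = cs_phi (t + h) x u
}.

Arguments cs_adm {_ _ _} _ _ _.
Arguments cs_phi {_ _ _} _ _ _ _.

(** * Comparison functions (functions R_+ -> R_+, encoded on R, only
    their values on [0, +oo) matter) *)
Definition cont_on_nonneg (f : R -> R) : Prop :=
  forall x, 0 <= x -> forall eps, 0 < eps -> exists delta, 0 < delta /\
    forall y, 0 <= y -> Rabs (y - x) < delta -> Rabs (f y - f x) < eps.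

Definition class_K (g : R -> R) : Prop :=
  cont_on_nonneg g /\ g 0 = 0 /\
  (forall x, 0 <= x -> 0 <= g x) /\
  (forall x y, 0 <= x -> x < y -> g x < g y).

Definition class_Kinf (g : R -> R) : Prop :=
  class_K g /\ (forall M, exists x, 0 <= x /\ M < g x).

Definition class_L (g : R -> R) : Prop :=
  cont_on_nonneg g /\
  (forall x, 0 <= x -> 0 <= g x) /\
  (forall x y, 0 <= x -> x <= y -> g y <= g x) /\
  (forall eps, 0 < eps -> exists T, forall t, T <= t -> g t < eps).

Definition class_KL (b : R -> R -> R) : Prop :=
  (forall t, 0 <= t -> class_K (fun r => b r t)) /\
  (forall r, 0 < r -> class_L (fun t => b r t)).

Definition is_linear_fun (g : R -> R) : Prop :=
  exists c, forall s, 0 <= s -> g s = c * s.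

Definition ISS_wrt (X V : NormedSpace) (I : InputSpace V)
    (S : ControlSystem X V I) (Uc : (Rnn -> V) -> Prop) : Prop :=
  exists beta gamma, class_KL beta /\ class_K gamma /\
    forall t x u, 0 <= t -> cs_adm S x u -> Uc u ->
      ns_norm (cs_phi S t x u) <= beta (ns_norm x) t + gamma (is_norm I u).

Arguments ISS_wrt {_ _ _} _ _.

Definition ISS (X V : NormedSpace) (I : InputSpace V)
    (S : ControlSystem X V I) : Prop :=
  ISS_wrt S (is_mem I).

Definition expISS_gain_wrt (X V : NormedSpace) (I : InputSpace V)
    (S : ControlSystem X V I) (Uc : (Rnn -> V) -> Prop)
    (gainOK : (R -> R) -> Prop) : Prop :=
  exists M a gamma, 0 < M /\ 0 < a /\ class_Kinf gamma /\ gainOK gamma /\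
    forall t x u, 0 <= t -> cs_adm S x u -> Uc u ->
      ns_norm (cs_phi S t x u) <= M * exp (- a * t) * ns_norm x + gamma (is_norm I u).

Arguments expISS_gain_wrt {_ _ _} _ _ _.

Definition expISS_wrt (X V : NormedSpace) (I : InputSpace V)
    (S : ControlSystem X V I) (Uc : (Rnn -> V) -> Prop) : Prop :=
  expISS_gain_wrt S Uc (fun _ => True).

Definition expISS_lin_wrt (X V : NormedSpace) (I : InputSpace V)
    (S : ControlSystem X V I) (Uc : (Rnn -> V) -> Prop) : Prop :=
  expISS_gain_wrt S Uc is_linear_fun.

Arguments ISS {_ _ _} _.
Arguments expISS_wrt {_ _ _} _ _.
Arguments expISS_lin_wrt {_ _ _} _ _.
Arguments is_input_cone {_} _ _.
Arguments input_le {_} _ _ _.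
Arguments cone_le {_} _ _ _.

(* Main.v *)
Require Import Defs.
From Stdlib Require Import Reals Lra.
Open Scope R_scope.

Lemma K_mono f : class_K f -> forall x y, 0 <= x -> x <= y -> f x <= f y.
Proof.
  intros [_ [_ [_ Hs]]] x y Hx Hxy.
  destruct (Rle_lt_or_eq_dec _ _ Hxy) as [H|H].
  - left; apply Hs; auto.
  - subst; lra.
Qed.

Lemma cont_comp f g : cont_on_nonneg f -> cont_on_nonneg g ->
  (forall x, 0 <= x -> 0 <= g x) -> cont_on_nonneg (fun x => f (g x)).
Proof.
  intros Hf Hg Hp x Hx eps He.
  destruct (Hf (g x) (Hp x Hx) eps He) as [d1 [Hd1 H1]].
  destruct (Hg x Hx d1 Hd1) as [d2 [Hd2 H2]].
  exists d2; split; auto.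
Qed.

Lemma K_comp f g : class_K f -> class_K g -> class_K (fun x => f (g x)).
Proof.
  intros Hf Hg. pose proof Hf as [cf [f0 [fp fs]]]. pose proof Hg as [cg [g0 [gp gs]]].
  split; [|split; [|split]].
  - apply cont_comp; auto.
  - rewrite g0; auto.
  - intros; apply fp, gp; auto.
  - intros x y Hx Hxy. apply fs; auto.
Qed.

Lemma Kinf_comp f g : class_Kinf f -> class_Kinf g -> class_Kinf (fun x => f (g x)).
Proof.
  intros [Hf uf] [Hg ug]. split. apply K_comp; auto.
  intros M. destruct (uf M) as [y [Hy My]]. destruct (ug y) as [x [Hx yx]].
  exists x; split; auto.
  destruct Hf as [_ [_ [_ fs]]]. pose proof (fs y (g x) Hy yx). lra.
Qed.

Lemma Kinf_scal c : 0 < c -> class_Kinf (fun x => c * x).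
Proof.
  intros Hc. split; [split; [|split; [|split]]|].
  - intros x Hx eps He. exists (eps / c); split.
    + apply Rdiv_lt_0_compat; auto.
    + intros y Hy Hyx. replace (c*y - c*x) with (c*(y-x)) by ring.
      rewrite Rabs_mult, (Rabs_right c) by lra.
      apply (Rmult_lt_compat_l c) in Hyx; auto.
      replace (c * (eps/c)) with eps in Hyx by (field; lra). lra.
  - ring.
  - intros; nra.
  - intros; nra.
  - intros M. exists (Rabs M / c + 1). split.
    + pose proof (Rabs_pos M). assert (0 <= Rabs M / c) by (unfold Rdiv; apply Rmult_le_pos; [lra|left; apply Rinv_0_lt_compat; lra]). lra.
    + replace (c * (Rabs M / c + 1)) with (Rabs M + c) by (field; lra).
      pose proof (Rle_abs M). lra.
Qed.

Lemma L_comp f g : class_K f -> class_L g -> class_L (fun t => f (g t)).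
Proof.
  intros Hf Hg. pose proof Hf as [cf [f0 [fp fs]]]. pose proof Hg as [cg [gp [gm gl]]].
  split; [|split; [|split]].
  - apply cont_comp; auto.
  - intros; apply fp, gp; auto.
  - intros x y Hx Hxy. apply (K_mono f Hf); auto. apply gp; lra.
  - intros eps He. destruct (cf 0 (Rle_refl 0) eps He) as [d [Hd H]].
    destruct (gl d Hd) as [T HT]. exists (Rmax T 0). intros t Ht.
    assert (T <= t) by (pose proof (Rmax_l T 0); lra).
    assert (0 <= t) by (pose proof (Rmax_r T 0); lra).
    pose proof (HT t H0). pose proof (gp t H1).
    assert (Rabs (g t - 0) < d) by (rewrite Rminus_0_r, Rabs_right; lra).
    pose proof (H (g t) H3 H4). rewrite f0, Rminus_0_r in H5.
    pose proof (Rle_abs (f (g t))). lra.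
Qed.

Lemma KL_comp f b : class_K f -> class_KL b -> class_KL (fun r t => f (b r t)).
Proof.
  intros Hf [H1 H2]. split.
  - intros t Ht. apply (K_comp f (fun r => b r t)); auto.
  - intros r Hr. apply (L_comp f (fun t => b r t)); auto.
Qed.

Lemma rho_split rho : class_K rho -> forall a b, 0 <= a -> 0 <= b ->
  rho (2*a + 2*b) <= rho (4*a) + rho (4*b).
Proof.
  intros Hr a b Ha Hb. pose proof Hr as [_ [_ [rp _]]].
  assert (0 <= rho (4*a)) by (apply rp; lra).
  assert (0 <= rho (4*b)) by (apply rp; lra).
  destruct (Rle_dec a b).
  - assert (rho (2*a+2*b) <= rho (4*b)) by (apply (K_mono rho Hr); lra). lra.
  - assert (rho (2*a+2*b) <= rho (4*a)) by (apply (K_mono rho Hr); lra). lra.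
Qed.

Theorem mainTheorem1
  (X V : NormedSpace) (I : InputSpace V) (S : ControlSystem X V I)
  (KX : X -> Prop) (KU : (Rnn -> V) -> Prop)
  (HKX : is_pos_cone X KX) (HKU : is_input_cone I KU)
  (Hmono : forall t x u1 u2, 0 <= t -> cs_adm S x u1 -> cs_adm S x u2 ->
     input_le KU u1 u2 -> cone_le KX (cs_phi S t x u1) (cs_phi S t x u2))
  (Hadm : forall x u, cs_adm S x u <-> is_mem I u)
  (Uc : (Rnn -> V) -> Prop) (HUc : forall u, Uc u -> is_mem I u)
  (rho : R -> R) (Hrho : class_Kinf rho)
  (Hi : forall xm x xp, cone_le KX xm x -> cone_le KX x xp ->
     ns_norm x <= rho (ns_norm xm + ns_norm xp))
  (eta : R -> R) (Heta : class_Kinf eta)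
  (Hii : forall u, is_mem I u -> exists um up,
     Uc um /\ Uc up /\ input_le KU um u /\ input_le KU u up /\
     is_norm I um <= eta (is_norm I u) /\ is_norm I up <= eta (is_norm I u)) :
  (ISS S <-> ISS_wrt S Uc) /\
  (is_linear_fun rho ->
     (expISS_wrt S (is_mem I) <-> expISS_wrt S Uc) /\
     (expISS_lin_wrt S Uc -> is_linear_fun eta -> expISS_lin_wrt S (is_mem I))).
Proof.
  assert (Hsand : forall t x u, 0 <= t -> is_mem I u -> exists um up,
     Uc um /\ Uc up /\ is_norm I um <= eta (is_norm I u) /\
     is_norm I up <= eta (is_norm I u) /\
     ns_norm (cs_phi S t x u) <= rho (ns_norm (cs_phi S t x um) + ns_norm (cs_phi S t x up))).
  { intros t x u Ht Hu. destruct (Hii u Hu) as [um [up [A [B [C [D [E F]]]]]]].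
    exists um, up. repeat split; auto. apply Hi.
    - apply Hmono; auto; apply Hadm; auto.
    - apply Hmono; auto; apply Hadm; auto. }
  assert (etap : forall s, 0 <= s -> 0 <= eta s)
    by (destruct Heta as [[_ [_ [p _]]] _]; auto).
  split.
  - split.
    + intros [b [g [Hb [Hg H]]]]. exists b, g. split; [auto|split; [auto|]].
      intros. apply H; auto.
    + intros [b [g [Hb [Hg H]]]].
      exists (fun r t => rho (4 * b r t)), (fun s => rho (4 * g (eta s))).
      split; [|split].
      * apply (KL_comp (fun y => rho (4*y)) b); auto.
        apply (K_comp rho (fun y => 4*y)). apply Hrho. apply Kinf_scal; lra.
      * apply (K_comp (fun y => rho (4*y)) (fun s => g (eta s))).
        apply (K_comp rho (fun y => 4*y)). apply Hrho. apply Kinf_scal; lra.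
        apply K_comp; auto. apply Heta.
      * intros t x u Ht Hx _. apply Hadm in Hx.
        destruct (Hsand t x u Ht Hx) as [um [up [A [B [C [D E]]]]]].
        pose proof (H t x um Ht (proj2 (Hadm x um) (HUc um A)) A).
        pose proof (H t x up Ht (proj2 (Hadm x up) (HUc up B)) B).
        pose proof (is_norm_ge0 _ I um (HUc um A)).
        pose proof (is_norm_ge0 _ I up (HUc up B)).
        pose proof (is_norm_ge0 _ I u Hx).
        assert (g (is_norm I um) <= g (eta (is_norm I u))) by (apply (K_mono g Hg); auto).
        assert (g (is_norm I up) <= g (eta (is_norm I u))) by (apply (K_mono g Hg); auto).
        assert (Hb0 : 0 <= b (ns_norm x) t)
          by (destruct Hb as [Hb _]; destruct (Hb t Ht) as [_ [_ [p _]]]; apply p, ns_norm_ge0).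
        assert (Hg0 : 0 <= g (eta (is_norm I u)))
          by (destruct Hg as [_ [_ [p _]]]; apply p, etap; auto).
        pose proof (ns_norm_ge0 _ (cs_phi S t x um)).
        pose proof (ns_norm_ge0 _ (cs_phi S t x up)).
        assert (rho (ns_norm (cs_phi S t x um) + ns_norm (cs_phi S t x up))
          <= rho (2 * b (ns_norm x) t + 2 * g (eta (is_norm I u))))
          by (apply (K_mono rho (proj1 Hrho)); lra).
        pose proof (rho_split rho (proj1 Hrho) _ _ Hb0 Hg0). lra.
  - intros [c Hc].
    assert (Hcpos : 0 < c).
    { destruct Hrho as [[_ [r0 [_ rs]]] _]. pose proof (rs 0 1 (Rle_refl 0) Rlt_0_1).
      rewrite r0, (Hc 1) in H by lra. lra. }
    assert (Htr : forall M a g, class_Kinf g ->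
      (forall t x u, 0 <= t -> cs_adm S x u -> Uc u ->
        ns_norm (cs_phi S t x u) <= M * exp (- a * t) * ns_norm x + g (is_norm I u)) ->
      forall t x u, 0 <= t -> cs_adm S x u -> is_mem I u ->
        ns_norm (cs_phi S t x u) <= (2*c*M) * exp (- a * t) * ns_norm x
           + (fun s => 2 * c * g (eta s)) (is_norm I u)).
    { intros M a g Hg H t x u Ht _ Hx. cbv beta.
      destruct (Hsand t x u Ht Hx) as [um [up [A [B [C [D E]]]]]].
      pose proof (H t x um Ht (proj2 (Hadm x um) (HUc um A)) A).
      pose proof (H t x up Ht (proj2 (Hadm x up) (HUc up B)) B).
      pose proof (is_norm_ge0 _ I um (HUc um A)).
      pose proof (is_norm_ge0 _ I up (HUc up B)).
      pose proof (is_norm_ge0 _ I u Hx).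
      assert (g (is_norm I um) <= g (eta (is_norm I u))) by (apply (K_mono g (proj1 Hg)); auto).
      assert (g (is_norm I up) <= g (eta (is_norm I u))) by (apply (K_mono g (proj1 Hg)); auto).
      pose proof (ns_norm_ge0 _ (cs_phi S t x um)).
      pose proof (ns_norm_ge0 _ (cs_phi S t x up)).
      rewrite Hc in E by lra.
      set (P := ns_norm (cs_phi S t x um) + ns_norm (cs_phi S t x up)) in *.
      assert (P <= 2 * (M * exp (- a * t) * ns_norm x) + 2 * g (eta (is_norm I u))) by (unfold P; lra).
      apply (Rmult_le_compat_l c) in H9; [|lra]. nra. }
    split; [split|].
    + intros [M [a [g [HM [Ha [Hg [_ H]]]]]]]. exists M, a, g.
      split; [auto|split; [auto|split; [|split]]]. auto. exact Logic.I. intros. apply H; auto.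
    + intros [M [a [g [HM [Ha [Hg [_ H]]]]]]].
      exists (2*c*M), a, (fun s => 2 * c * g (eta s)).
      split; [auto|split; [auto|split; [|split]]]. 3: exact Logic.I.
      * apply Rmult_lt_0_compat; lra.
      * apply (Kinf_comp (fun y => 2*c*y) (fun s => g (eta s))).
        apply Kinf_scal; lra. apply Kinf_comp; auto.
      * eapply Htr; eauto.
    + intros [M [a [g [HM [Ha [Hg [[d Hd] H]]]]]]] [e He].
      exists (2*c*M), a, (fun s => 2 * c * g (eta s)).
      split; [auto|split; [auto|split; [|split]]].
      * apply Rmult_lt_0_compat; lra.
      * apply (Kinf_comp (fun y => 2*c*y) (fun s => g (eta s))).
        apply Kinf_scal; lra. apply Kinf_comp; auto.
      * exists (2*c*d*e). intros s Hs. rewrite Hd by (apply etap; auto).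
        rewrite He by auto. ring.
      * eapply Htr; eauto.
Qed.
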